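(* Let $n\in\mathbb{N}$, $p<1$ and $M\in(0,\frac1n)$. Then there exists $c>0$ such that $$\sum_{i=1}^n\frac{a_i^2+a_ib_i}{|a_i+b_i|^p}\ge c|a|^{2-p}$$ for all $a,b\in\mathbb{R}^n$ satisfying $|b|\le M|a|$.
   Context: $|\cdot|$ is the Euclidean norm. Each summand equals $a_i(a_i+b_i)|a_i+b_i|^{-p}$ and is understood to be $0$ when $a_i+b_i=0$. *)

(* Defs.v *)
From HB Require Import structures.
From mathcomp Require Import all_boot all_order all_algebra.
From mathcomp Require Import reals exp.
Set Implicit Arguments. Unset Strict Implicit. Unset Printing Implicit Defensive.
Import Order.TTheory GRing.Theory Num.Theory.
Local Open Scope ring_scope.

Definition enorm (R : realType) (n : nat) (a : 'rV[R]_n) : R :=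
  Num.sqrt (\sum_(i < n) (a 0 i) ^+ 2).

Definition summand (R : realType) (p x y : R) : R :=
  if x + y == 0 then 0 else x * (x + y) * powR `|x + y| (- p).

(* Main.v *)
Require Import Defs.
From HB Require Import structures.
From mathcomp Require Import all_boot all_order all_algebra.
From mathcomp Require Import reals exp.
From mathcomp Require Import ring lra.
Import Order.TTheory GRing.Theory Num.Theory.
Local Open Scope ring_scope.

Section H.
Variable R : realType.

Lemma sq_norm (x : R) : `|x| ^+ 2 = x ^+ 2.
Proof. by rewrite real_normK ?num_real. Qed.

Lemma pw_split (p t : R) : p < 1 -> 0 <= t -> t * powR t (- p) = powR t (1 - p).
Proof.
move=> hp ht; have h1 : 0 < 1 - p by lra.
rewrite -(mulr_powRB1 ht h1).
by congr (_ * powR _ _); ring.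
Qed.

Lemma L1 (p x y D : R) : p < 1 -> `|y| <= D ->
  - (`|y| * powR D (1 - p)) <= summand p x y.
Proof.
move=> hp hyD; rewrite /summand.
have hy0 : 0 <= `|y| := normr_ge0 y.
have hQ : 0 <= powR D (1 - p) := powR_ge0 _ _.
case: eqP => [_|hs]; first by rewrite oppr_le0 mulr_ge0.
set s := x + y; set t := `|s|.
have ht : 0 <= t := normr_ge0 s.
have hu : 0 <= powR t (- p) := powR_ge0 _ _.
have hP := @pw_split p t hp ht.
have h1 : t * t - `|y| * t <= x * s.
  have -> : x * s = s * s - y * s by rewrite /s; ring.
  have -> : t * t = s * s by rewrite -expr2 sq_norm expr2.
  have : y * s <= `|y * s| := ler_norm _.
  rewrite normrM -/t; lra.
have h2 : (t - `|y|) * powR t (1 - p) <= x * s * powR t (- p).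
  rewrite -hP.
  have -> : (t - `|y|) * (t * powR t (- p)) = (t * t - `|y| * t) * powR t (- p) by ring.
  exact: ler_wpM2r.
case: (lerP `|y| t) => hyt.
  apply: le_trans h2; apply: le_trans (_ : 0 <= _).
    by rewrite oppr_le0 mulr_ge0.
  by rewrite mulr_ge0 ?subr_ge0 ?powR_ge0.
have hPQ : powR t (1 - p) <= powR D (1 - p).
  apply: ge0_ler_powR; rewrite ?nnegrE; [lra| exact: ht | lra | lra].
have hP0 : 0 <= powR t (1 - p) := powR_ge0 _ _.
apply: le_trans h2; nra.
Qed.

Lemma L2 (p x y : R) : p < 1 -> `|y| <= `|x| ->
  `|x| * powR (`|x| - `|y|) (1 - p) <= summand p x y.
Proof.
move=> hp hyx; rewrite /summand.
case: eqP => [hs|hs].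
  have -> : `|x| - `|y| = 0.
    have -> : y = - x by apply/eqP; rewrite -addr_eq0 addrC; apply/eqP.
    by rewrite normrN subrr.
  by rewrite powR0 ?mulr0 //; apply/eqP; lra.
set s := x + y; set t := `|s|.
have ht : 0 <= t := normr_ge0 s.
have hxs : 0 <= x * s.
  have -> : x * s = x * x + x * y by rewrite /s; ring.
  have : - (x * y) <= `|x * y| by rewrite -normrN ler_norm.
  rewrite normrM.
  have -> : x * x = `|x| * `|x| by rewrite -!expr2 sq_norm.
  have : `|x| * `|y| <= `|x| * `|x| by rewrite ler_wpM2l.
  lra.
have -> : x * s = `|x| * t by rewrite /t -normrM ger0_norm.
rewrite -mulrA (@pw_split p t hp ht) //.
apply: ler_wpM2l => //.
apply: ge0_ler_powR; rewrite ?nnegrE; [lra | lra | exact: ht |].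
by rewrite /t /s lerB_normD.
Qed.

Lemma CS (n : nat) (x : 'I_n -> R) :
  (\sum_(i < n) x i) ^+ 2 <= n%:R * \sum_(i < n) x i ^+ 2.
Proof.
elim: n x => [|n IH] x; first by rewrite !big_ord0 expr0n mul0r.
rewrite !big_ord_recr /=.
have := IH (fun i => x (widen_ord (leqnSn n) i)).
set S := \sum_(i < n) _; set Q := \sum_(i < n) _; set y := x _.
have hQ : 0 <= Q by rewrite /Q sumr_ge0 // => i _; rewrite sqr_ge0.
have hn : 0 <= n%:R :> R by rewrite ler0n.
rewrite -natr1 => h.
have key : 0 <= n%:R * (Q + n%:R * y ^+ 2 - 2 * S * y).
  have : 0 <= (S - n%:R * y) ^+ 2 by rewrite sqr_ge0.
  nra.
have k2 : 0 <= Q + n%:R * y ^+ 2 - 2 * S * y.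
  case: (eqVneq (n%:R : R) 0) => hn0.
    rewrite hn0 mul0r in h; rewrite hn0 mul0r addr0.
    have hS : S = 0 by apply/eqP; rewrite -sqrf_eq0 eq_le h sqr_ge0.
    by rewrite hS mulr0 mul0r subr0.
  have hnp : 0 < (n%:R : R) by rewrite lt_def hn0 hn.
  by rewrite pmulr_rge0 in key.
nra.
Qed.

End H.

Theorem lemma12 (R : realType) (n : nat) (p M : R)
  (hp : p < 1) (hM0 : 0 < M) (hM1 : M < 1 / n%:R) :
  exists2 c : R, 0 < c &
    forall a b : 'rV[R]_n, enorm b <= M * enorm a ->
      c * powR (enorm a) (2 - p) <= \sum_(i < n) summand p (a 0 i) (b 0 i).
Proof.
case: n hM1 => [|k] hM1.
  by rewrite mul1r invr0 in hM1; lra.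
set N : R := k.+1%:R.
have hN : 0 < N by rewrite /N ltr0Sn.
have hθ : N * M < 1.
  by move: hM1; rewrite -/N ltr_pdivlMr // mulrC.
set sN := Num.sqrt N.
have hsN : 0 < sN by rewrite /sN sqrtr_gt0.
have hq : 0 < 2 - p by lra.
exists (powR ((1 - N * M) / sN) (2 - p)).
  by apply: powR_gt0; rewrite divr_gt0 // subr_gt0.
move=> a b hb.
have [j _ hj] := @arg_maxP _ _ _ ord0 predT (fun i => `|a 0 i|) isT.
set A := `|a 0 j|.
have hA : 0 <= A := normr_ge0 _.
set γ := `|b 0 j|.
set B := \sum_(i < k.+1) `|b 0 i|.
set β := \sum_(i < k.+1 | i != j) `|b 0 i|.
have hB : B = γ + β by rewrite /B (bigD1 j).
have hβ0 : 0 <= β by rewrite /β sumr_ge0.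
have hγ0 : 0 <= γ := normr_ge0 _.
set Sa := \sum_(i < k.+1) a 0 i ^+ 2.
set Sb := \sum_(i < k.+1) b 0 i ^+ 2.
have hSa0 : 0 <= Sa by rewrite /Sa sumr_ge0 // => i _; rewrite sqr_ge0.
have hSb0 : 0 <= Sb by rewrite /Sb sumr_ge0 // => i _; rewrite sqr_ge0.
have ea : enorm a ^+ 2 = Sa by rewrite /enorm sqr_sqrtr.
have eb : enorm b ^+ 2 = Sb by rewrite /enorm sqr_sqrtr.
have hna : 0 <= enorm a by rewrite /enorm sqrtr_ge0.
have hnb : 0 <= enorm b by rewrite /enorm sqrtr_ge0.
have hSa : Sa <= N * A ^+ 2.
  have -> : N * A ^+ 2 = \sum_(i < k.+1) A ^+ 2.
    by rewrite sumr_const card_ord mulr_natl.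
  apply: ler_sum => i _; rewrite -sq_norm /A.
  rewrite ler_sqr ?nnegrE ?normr_ge0 //; exact: hj.
have hSb : Sb <= M ^+ 2 * Sa.
  rewrite -ea -eb -exprMn; rewrite ler_sqr ?nnegrE ?mulr_ge0 //; lra.
have hCS : B ^+ 2 <= N * Sb.
  have := CS R k.+1 (fun i => `|b 0 i|).
  have e : \sum_(i < k.+1) `|b 0 i| ^+ 2 = Sb by apply: eq_bigr => i _; exact: sq_norm.
  by rewrite e.
have hB0 : 0 <= B by rewrite /B sumr_ge0.
have hBle : B <= N * M * A.
  have h2 : B ^+ 2 <= (N * M * A) ^+ 2.
    have s1 : M ^+ 2 * Sa <= M ^+ 2 * (N * A ^+ 2) by rewrite ler_wpM2l ?sqr_ge0.
    have s2 : N * Sb <= N * (M ^+ 2 * (N * A ^+ 2)).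
      by apply: ler_wpM2l; [exact: ltW | exact: le_trans hSb s1].
    have -> : (N * M * A) ^+ 2 = N * (M ^+ 2 * (N * A ^+ 2)) by ring.
    exact: le_trans hCS s2.
  have hNMA0 : 0 <= N * M * A by rewrite !mulr_ge0 // ltW.
  by rewrite -ler_sqr ?nnegrE.
set D := A - γ.
have hNMA : N * M * A <= A.
  have : 0 <= (1 - N * M) * A by rewrite mulr_ge0 // subr_ge0 ltW.
  by rewrite mulrBl mul1r subr_ge0.
have hBA : B <= A := le_trans hBle hNMA.
have hγA : γ <= A by move: hBA; rewrite hB; lra.
have hbi : forall i, i != j -> `|b 0 i| <= D.
  move=> i hi.
  have : `|b 0 i| <= β by rewrite /β (bigD1 i) //= lerDl sumr_ge0.
  rewrite /D; lra.
have hsplit : \sum_(i < k.+1) summand p (a 0 i) (b 0 i) =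
   summand p (a 0 j) (b 0 j) + \sum_(i < k.+1 | i != j) summand p (a 0 i) (b 0 i).
  by rewrite (bigD1 j).
have hjt : A * powR D (1 - p) <= summand p (a 0 j) (b 0 j) by exact: L2.
have hrest : - (β * powR D (1 - p)) <= \sum_(i < k.+1 | i != j) summand p (a 0 i) (b 0 i).
  rewrite /β mulr_suml -sumrN; apply: ler_sum => i hi; apply: L1 => //; exact: hbi.
set T := (1 - N * M) * A.
have hT0 : 0 <= T by rewrite /T mulr_ge0 // subr_ge0 ltW.
have hTb : T <= A - β by rewrite /T; lra.
have hTD : T <= D by rewrite /T /D; lra.
have hPD : powR T (1 - p) <= powR D (1 - p).
  apply: ge0_ler_powR; rewrite ?nnegrE; lra.
have hTq : powR T (2 - p) <= \sum_(i < k.+1) summand p (a 0 i) (b 0 i).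
  rewrite hsplit.
  have -> : powR T (2 - p) = T * powR T (1 - p).
    by rewrite -(mulr_powRB1 hT0 hq); congr (_ * powR _ _); ring.
  have hP0 : 0 <= powR T (1 - p) := powR_ge0 _ _.
  have : T * powR T (1 - p) <= (A - β) * powR D (1 - p).
    by apply: ler_pM.
  lra.
apply: le_trans hTq.
have hsq : enorm a <= sN * A.
  have -> : sN * A = Num.sqrt (N * A ^+ 2).
    by rewrite (sqrtrM _ (ltW hN)) sqrtr_sqr (ger0_norm hA).
  exact: ler_wsqrtr.
have hc0 : 0 <= (1 - N * M) / sN by rewrite divr_ge0 ?subr_ge0 // (ltW hθ, ltW hsN).
rewrite -(powRM _ hc0 hna).
have hle : (1 - N * M) / sN * enorm a <= T.
  rewrite /T mulrAC ler_pdivrMr //.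
  rewrite -mulrA.
  apply: ler_wpM2l; [by rewrite subr_ge0 (ltW hθ) | by rewrite mulrC].
apply: ge0_ler_powR => //; [exact: ltW | by rewrite nnegrE mulr_ge0].
Qed.
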